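(* Let $n,m\ge 1$ and let $u_1,\ldots,u_r$ be left normed commutators $u_j=[t_1,t_2,t_{j_3},\ldots,t_{j_k}]$ ($j_s\in\{1,2\}$) with $\deg_{t_1}u_j=n$ and $\deg_{t_2}u_j=m$ for all $j$. Let $\alpha_1,\ldots,\alpha_r\in K[X]$ and suppose $f(C_1,C_2)=\sum_j\alpha_ju_j(C_1,C_2)\in F$. Then the following are equivalent: (1) $f(C_1,C_2)$ is strongly central in $F$; (2) $f(C_1,C_2)$ is central in $F$; (3) $\alpha_1+\cdots+\alpha_r=0$ in $K[X;Y]$.
   Context: $K$ is an infinite field of characteristic different from 2. Let $X=\{x_1,x_2,x_1',x_2'\}$ and $Y=\{y_1,y_2,y_1',y_2'\}$, and let $K[X;Y]\cong K[X]\otimes_K E(Y)$ be the free supercommutative algebra: the $x$'s are even commuting variables, the $y$'s are odd pairwise anticommuting variables, and $E(Y)$ is the Grassmann algebra on the vector space with basis $Y$; $K[X]$ is the polynomial subalgebra, whose elements act on matrices as scalars. Put $C_1=\begin{pmatrix} x_1&y_1\\ y_1'&x_1'\end{pmatrix}$, $C_2=\begin{pmatrix} x_2&y_2\\ y_2'&x_2'\end{pmatrix}$, and let $F=K[C_1,C_2]$ be the unital $K$-subalgebra of $M_2(K[X;Y])$ generated by $C_1,C_2$. Commutators are $[a,b]=ab-ba$, left normed: $[a_1,\ldots,a_k]=[[a_1,\ldots,a_{k-1}],a_k]$; $t_1,t_2$ are free noncommuting variables. An element $a\in F$ is strongly central if $a$ is central in $F$ and $ab$ is central in $F$ for every $b\in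 F$. *)

(* Defs.v *)
From HB Require Import structures.
From mathcomp Require Import all_boot all_order all_algebra.
From mathcomp Require Import mpoly.
Set Implicit Arguments. Unset Strict Implicit. Unset Printing Implicit Defensive.
Import GRing.Theory.
Local Open Scope ring_scope.

(* K[X] = K[x1, x2, x1', x2'] with x1 = 'X_0, x2 = 'X_1, x1' = 'X_2, x2' = 'X_3. *)
Notation KX K := {mpoly K[4]}.

(* The free supercommutative algebra K[X;Y] = K[X] (x) E(Y) is realised
   faithfully inside the matrix ring A = M_16(K[X]) acting on the 16-dimensional
   K[X]-module E(Y) (basis e_T, T subset of {0,1,2,3}, encoded by the bits of an
   index j < 16) by LEFT multiplication: ygen k is left multiplication by the
   odd generator number k, i.e.  y_k e_T = (-1)^#{t in T | t < k} e_{T u {k}}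
   if k \notin T, and 0 otherwise. *)
Definition SA (K : fieldType) := 'M[KX K]_16.

Definition xgen (K : fieldType) (k : 'I_4) : SA K := ('X_k : KX K)%:M.

Definition ygen (K : fieldType) (k : nat) : SA K :=
  \matrix_(i < 16, j < 16)
    (if ~~ odd (j %/ 2 ^ k) && (i == j + 2 ^ k :> nat)
     then (-1) ^+ (\sum_(l < k) odd (j %/ 2 ^ l))
     else 0).

Definition scalX (K : fieldType) (a : KX K) : 'M[SA K]_2 := ((a%:M : SA K))%:M.
Definition scalK (K : fieldType) (c : K) : 'M[SA K]_2 := scalX (c%:MP).

Definition mx2 (K : fieldType) (a b c d : SA K) : 'M[SA K]_2 :=
  \matrix_(i < 2, j < 2)
    (if i == 0 :> nat then (if j == 0 :> nat then a else b)
     else (if j == 0 :> nat then c else d)).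

(* C1 = [[x1, y1], [y1', x1']],  C2 = [[x2, y2], [y2', x2']] with
   y1 = ygen 0, y2 = ygen 1, y1' = ygen 2, y2' = ygen 3. *)
Definition C1 (K : fieldType) : 'M[SA K]_2 :=
  mx2 (xgen K 0) (ygen K 0) (ygen K 2) (xgen K 2).
Definition C2 (K : fieldType) : 'M[SA K]_2 :=
  mx2 (xgen K 1) (ygen K 1) (ygen K 3) (xgen K 3).

Inductive inF (K : fieldType) : 'M[SA K]_2 -> Prop :=
  | inF_scal (c : K) : inF (scalK c)
  | inF_C1 : inF (C1 K)
  | inF_C2 : inF (C2 K)
  | inF_add a b : inF a -> inF b -> inF (a + b)
  | inF_mul a b : inF a -> inF b -> inF (a * b).

Definition central_in_F (K : fieldType) (a : 'M[SA K]_2) : Prop :=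
  forall b, inF b -> a * b = b * a.

Definition strongly_central_in_F (K : fieldType) (a : 'M[SA K]_2) : Prop :=
  central_in_F a /\ forall b, inF b -> central_in_F (a * b).

Definition comm (R : pzRingType) (a b : R) : R := a * b - b * a.

(* A left normed commutator [t1, t2, t_{j3}, ..., t_{jk}] is encoded by the
   sequence s = [j3; ...; jk] of booleans (false = t1, true = t2);
   its value at (a1, a2) is: *)
Definition lncomm (R : pzRingType) (a1 a2 : R) (s : seq bool) : R :=
  foldl (fun acc (b : bool) => comm acc (if b then a2 else a1)) (comm a1 a2) s.

Definition deg_t1 (s : seq bool) : nat := (count negb s).+1.
Definition deg_t2 (s : seq bool) : nat := (count id s).+1.

(* Main.v *)
Require Import Defs.
From HB Require Import structures.
From mathcomp Require Import all_boot all_order all_algebra.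
From mathcomp Require Import mpoly.
From mathcomp Require Import ring.
Import GRing.Theory.
Local Open Scope ring_scope.

Definition bitn (k x : nat) : bool := odd (x %/ 2 ^ k).
Fixpoint cntf (k x : nat) : nat := if k is k'.+1 then (cntf k' x + bitn k' x)%N else 0%N.
Definition condf (i j a b : nat) : bool :=
  ~~ bitn j b && ~~ bitn i ((b + 2 ^ j) %% 16) && (a == ((b + 2 ^ j) %% 16 + 2 ^ i) %% 16)%N.
Definition ef i j b := (cntf i ((b + 2 ^ j) %% 16) + cntf j b)%N.
Lemma chk : all (fun i => all (fun j => all (fun a => all (fun b =>
  (condf i j a b == condf j i a b) && (condf i j a b ==> odd (ef i j b + ef j i b))
  && ~~ condf i i a b) (iota 0 16)) (iota 0 16)) (iota 0 4)) (iota 0 4).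
Proof. vm_compute. reflexivity. Qed.

Lemma chk_at i j a b : (i < 4)%N -> (j < 4)%N -> (a < 16)%N -> (b < 16)%N ->
  [&& (condf i j a b == condf j i a b), (condf i j a b ==> odd (ef i j b + ef j i b))
  & ~~ condf i i a b].
Proof.
move=> hi hj ha hb.
have H1 := allP (allP (allP (allP chk i ltac:(by rewrite mem_iota))
   j ltac:(by rewrite mem_iota)) a ltac:(by rewrite mem_iota)) b ltac:(by rewrite mem_iota).
move: H1.
by rewrite -andbA.
Qed.

Lemma sum_cnt k x : (\sum_(l < k) bitn l x)%N = cntf k x.
Proof. by elim: k => [|k IH]; rewrite ?big_ord0 // big_ord_recr /= IH. Qed.

Lemma sum16 (R : nmodType) (F : 'I_16 -> R) k :
  \sum_(c < 16) (if (c : nat) == k then F c else 0) = if (k < 16)%N then F (inord k) else 0.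
Proof.
case: ltnP => hk.
  rewrite (bigD1 (Ordinal hk)) //= eqxx big1 ?addr0.
    by congr F; apply: val_inj; rewrite /= inordK.
  by move=> c; rewrite -val_eqE /= => /negbTE ->.
by rewrite big1 // => c _; rewrite (ltn_eqF (leq_trans (ltn_ord c) hk)).
Qed.

Lemma valY (j : 'I_16) (k : nat) : (k < 4)%N -> nat_of_ord (j + 2 ^ k) = ((j + 2 ^ k) %% 16)%N.
Proof.
case: k => [|[|[|[|k]]]] // _; rewrite [in LHS]/GRing.add /=; by case: j.
Qed.

Lemma Yentry (K : fieldType) k (a b : 'I_16) : (k < 4)%N -> ygen K k a b =
  if ~~ bitn k b && (a == (b + 2 ^ k) %% 16 :> nat)%N then (-1) ^+ cntf k b else 0.
Proof. by move=> hk; rewrite /ygen mxE -sum_cnt valY. Qed.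

Lemma YY_entry (K : fieldType) i j (a b : 'I_16) : (i < 4)%N -> (j < 4)%N ->
  (ygen K i * ygen K j) a b = if condf i j a b then (-1) ^+ ef i j b else 0.
Proof.
move=> hi hj; rewrite -mulmxE mxE.
transitivity (\sum_(c < 16) (if (c : nat) == ((b + 2 ^ j) %% 16)%N then
   (if ~~ bitn j b then ygen K i a c * (-1) ^+ cntf j b else 0) else 0)).
  apply: eq_bigr => c _; rewrite [ygen K j c b]Yentry //.
  case: (~~ bitn j b) => /=; last by rewrite mulr0 if_same.
  by case: (_ == _); rewrite ?mulr0.
rewrite sum16 ltn_pmod // /condf.
case: (~~ bitn j b) => //=; rewrite Yentry // inordK ?ltn_pmod //.
case: ifP => _; last by rewrite mul0r.
by rewrite -exprD.
Qed.

Lemma Yanti (K : fieldType) i j : (i < 4)%N -> (j < 4)%N ->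
  ygen K i * ygen K j = - (ygen K j * ygen K i).
Proof.
move=> hi hj; apply/matrixP => a b; rewrite [RHS]mxE !YY_entry //.
case/and3P: (chk_at i j a b hi hj (ltn_ord a) (ltn_ord b)) => /eqP <- H _.
case: ifP H => _ /= H; last by rewrite oppr0.
rewrite -(signr_odd _ (ef i j b)) -(signr_odd _ (ef j i b)).
move: H; rewrite oddD; case: (odd (ef i j b)); case: (odd (ef j i b)) => //= _;
  by rewrite ?expr0 ?expr1 ?opprK.
Qed.

Lemma Ysq (K : fieldType) i : (i < 4)%N -> ygen K i * ygen K i = 0.
Proof.
move=> hi; apply/matrixP => a b; rewrite [RHS]mxE YY_entry //.
by case/and3P: (chk_at i i a b hi hi (ltn_ord a) (ltn_ord b)) => _ _ /negbTE ->.
Qed.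

Definition sc {K : fieldType} (p : KX K) : SA K := p%:M.

Lemma scC (K : fieldType) (p : KX K) (M : SA K) : sc p * M = M * sc p.
Proof. by rewrite /sc -!mulmxE scalar_mxC. Qed.
Lemma scM (K : fieldType) (p q : KX K) : sc (p * q) = sc p * sc q.
Proof. by rewrite /sc scalar_mxM mulmxE. Qed.
Lemma scD (K : fieldType) (p q : KX K) : sc (p + q) = sc p + sc q.
Proof. by rewrite /sc raddfD. Qed.
Lemma scN (K : fieldType) (p : KX K) : sc (- p) = - sc p.
Proof. by rewrite /sc raddfN. Qed.
Lemma scB (K : fieldType) (p q : KX K) : sc (p - q) = sc p - sc q.
Proof. by rewrite scD scN. Qed.
Lemma sc0 (K : fieldType) : sc (0 : KX K) = 0.
Proof. by rewrite /sc raddf0. Qed.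
Lemma sc1 (K : fieldType) : sc (1 : KX K) = 1.
Proof. by []. Qed.
Lemma scsum (K : fieldType) (r : nat) (F : 'I_r -> KX K) : sc (\sum_j F j) = \sum_j sc (F j).
Proof. by rewrite /sc raddf_sum. Qed.
Lemma scMA (K : fieldType) (p q : KX K) (M : SA K) : sc p * (sc q * M) = sc (p * q) * M.
Proof. by rewrite scM mulrA. Qed.
Lemma scL (K : fieldType) (p : KX K) (A B : SA K) : A * (sc p * B) = sc p * (A * B).
Proof. by rewrite mulrA -scC mulrA. Qed.

Lemma xgenE (K : fieldType) k : xgen K k = sc 'X_k.
Proof. by []. Qed.

Lemma scE (K : fieldType) (p : KX K) (M : SA K) i j : (sc p * M) i j = p * M i j.
Proof. by rewrite /sc -mulmxE mul_scalar_mx mxE. Qed.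

Lemma scalX_mx2 (K : fieldType) (a : KX K) : scalX a = mx2 (sc a) 0 0 (sc a).
Proof.
apply/matrixP => i j; rewrite !mxE.
by case: i => [[|[|]]] //= hi; case: j => [[|[|]]] //= hj; rewrite ?mulr1n ?mulr0n.
Qed.

Opaque ygen sc.

Lemma mx2M (K : fieldType) (a b c d a' b' c' d' : SA K) :
  mx2 a b c d * mx2 a' b' c' d' =
  mx2 (a * a' + b * c') (a * b' + b * d') (c * a' + d * c') (c * b' + d * d').
Proof.
apply/matrixP => i j; rewrite -mulmxE !mxE !big_ord_recl big_ord0 addr0 !mxE /=.
by case: i => [[|[|]]] //= _; case: j => [[|[|]]].
Qed.
Lemma mx2D (K : fieldType) (a b c d a' b' c' d' : SA K) :
  mx2 a b c d + mx2 a' b' c' d' = mx2 (a + a') (b + b') (c + c') (d + d').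
Proof.
apply/matrixP => i j; rewrite !mxE.
by case: i => [[|[|]]] //= _; case: j => [[|[|]]].
Qed.
Lemma mx2N (K : fieldType) (a b c d : SA K) : - mx2 a b c d = mx2 (- a) (- b) (- c) (- d).
Proof.
apply/matrixP => i j; rewrite !mxE.
by case: i => [[|[|]]] //= _; case: j => [[|[|]]].
Qed.
Lemma mx2B (K : fieldType) (a b c d a' b' c' d' : SA K) :
  mx2 a b c d - mx2 a' b' c' d' = mx2 (a - a') (b - b') (c - c') (d - d').
Proof. by rewrite mx2N mx2D. Qed.
Lemma mx20 (K : fieldType) : mx2 0 0 0 0 = 0 :> 'M[SA K]_2.
Proof.
apply/matrixP => i j; rewrite !mxE.
by case: i => [[|[|]]] //= _; case: j => [[|[|]]].
Qed.
Lemma mx2_eta (K : fieldType) (M : 'M[SA K]_2) : M = mx2 (M 0 0) (M 0 1) (M 1 0) (M 1 1).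
Proof.
apply/matrixP => i j; rewrite !mxE.
case: i => [[|[|]]] //= hi; case: j => [[|[|]]] //= hj; congr (M _ _); exact: val_inj.
Qed.
Lemma mx2_inj (K : fieldType) (a b c d a' b' c' d' : SA K) :
  mx2 a b c d = mx2 a' b' c' d' -> [/\ a = a', b = b', c = c' & d = d'].
Proof.
move=> E.
have e := fun i j => congr1 (fun M : 'M[SA K]_2 => M i j) E.
by move: (e 0 0) (e 0 1) (e 1 0) (e 1 1); rewrite !mxE.
Qed.
Lemma mx2_sum (K : fieldType) (r : nat) (a b c d : 'I_r -> SA K) :
  \sum_j mx2 (a j) (b j) (c j) (d j) = mx2 (\sum_j a j) (\sum_j b j) (\sum_j c j) (\sum_j d j).
Proof.
apply/matrixP => i j; rewrite summxE [RHS]mxE.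
case: i => [[|[|]]] //= hi; case: j => [[|[|]]] //= hj;
  by apply: eq_bigr => k _; rewrite mxE.
Qed.

Definition Odd {K : fieldType} (q : SA K) := forall k, (k < 4)%N -> q * ygen K k = - (ygen K k * q).
Definition Even {K : fieldType} (d : SA K) := forall k, (k < 4)%N -> d * ygen K k = ygen K k * d.

Lemma OddY (K : fieldType) i : (i < 4)%N -> Odd (ygen K i).
Proof. by move=> hi k hk; rewrite Yanti. Qed.
Lemma OddD (K : fieldType) (q q' : SA K) : Odd q -> Odd q' -> Odd (q + q').
Proof. by move=> h h' k hk; rewrite mulrDl mulrDr h // h' // opprD. Qed.
Lemma OddN (K : fieldType) (q : SA K) : Odd q -> Odd (- q).
Proof. by move=> h k hk; rewrite mulNr mulrN h. Qed.
Lemma OddB (K : fieldType) (q q' : SA K) : Odd q -> Odd q' -> Odd (q - q').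
Proof. by move=> h h'; apply: OddD => //; apply: OddN. Qed.
Lemma Odd_sc (K : fieldType) p (q : SA K) : Odd q -> Odd (sc p * q).
Proof. by move=> h k hk; rewrite -mulrA h // mulrN scL. Qed.
Lemma Odd0 (K : fieldType) : Odd (0 : SA K).
Proof. by move=> k hk; rewrite mul0r mulr0 oppr0. Qed.
Lemma EvenD (K : fieldType) (q q' : SA K) : Even q -> Even q' -> Even (q + q').
Proof. by move=> h h' k hk; rewrite mulrDl mulrDr h // h'. Qed.
Lemma EvenN (K : fieldType) (q : SA K) : Even q -> Even (- q).
Proof. by move=> h k hk; rewrite mulNr mulrN h. Qed.
Lemma Even_sc (K : fieldType) p (q : SA K) : Even q -> Even (sc p * q).
Proof. by move=> h k hk; rewrite -mulrA (h k hk) [RHS]scL. Qed.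
Lemma Even0 (K : fieldType) : Even (0 : SA K).
Proof. by move=> k hk; rewrite mul0r mulr0. Qed.
Lemma EvenOO (K : fieldType) (q q' : SA K) : Odd q -> Odd q' -> Even (q * q').
Proof. by move=> h h' k hk; rewrite -mulrA h' // mulrN [q * (_ * _)]mulrA h // mulNr opprK -mulrA. Qed.
Lemma Even_sum (K : fieldType) r (F : 'I_r -> SA K) : (forall j, Even (F j)) -> Even (\sum_j F j).
Proof.
move=> h; elim/big_rec: _ => [|j x _ hx]; first exact: Even0.
exact: EvenD.
Qed.

Lemma Z1 (V : zmodType) (a b c : V) : a - b - (a + c) = - (c + b).
Proof. by rewrite opprD addrAC addrA subrr add0r opprD addrC. Qed.
Lemma Z2 (V : zmodType) (a b c : V) : a + b - (c + a) = - (c - b).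
Proof. by rewrite [c + a]addrC opprD addrA [a + b - a]addrAC subrr add0r opprB. Qed.
Lemma Z3 (V : zmodType) (a b c : V) : a + b - (b + c) = a - c.
Proof. by rewrite opprD addrA addrK. Qed.
Lemma Z4 (V : zmodType) (a b c : V) : - a + b - (c + b) = - (a + c).
Proof. by rewrite [c + b]addrC opprD addrA addrK opprD. Qed.

Lemma comm_key (K : fieldType) (d q r : SA K) (x x' : KX K) i i' :
  Even d -> Odd q -> Odd r -> (i < 4)%N -> (i' < 4)%N ->
  comm (mx2 d q r d) (mx2 (sc x) (ygen K i) (ygen K i') (sc x')) =
  mx2 (- (ygen K i * r + ygen K i' * q)) (- (sc (x - x') * q)) (sc (x - x') * r)
      (- (ygen K i * r + ygen K i' * q)).
Proof.
move=> hd hq hr hi hi'; rewrite /comm !mx2M mx2B.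
have E : forall (M : SA K) p, M * sc p = sc p * M by move=> M p; rewrite scC.
congr mx2.
- by rewrite (E d) hq // Z1.
- by rewrite hd // (E q) Z2 scB mulrBl.
- by rewrite (E r) hd // Z3 scB mulrBl.
- by rewrite hr // (E d) Z4.
Qed.

Definition a1 {K : fieldType} : KX K := 'X_0 - 'X_2.
Definition a2 {K : fieldType} : KX K := 'X_1 - 'X_3.
Definition w {K : fieldType} : SA K := ygen K 0 * ygen K 3 - ygen K 1 * ygen K 2.
Definition q0 {K : fieldType} : SA K := sc a1 * ygen K 1 - sc a2 * ygen K 0.
Definition r0 {K : fieldType} : SA K := sc a2 * ygen K 2 - sc a1 * ygen K 3.


Lemma Z5 (V : zmodType) (a b c d : V) : a + b - (c + d) = a - d - (c - b).
Proof. by rewrite opprD opprB !addrA [a - d + b]addrAC [RHS]addrAC. Qed.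
Lemma Z6 (V : zmodType) (a b c : V) : - a + b - (- c + b) = c - a.
Proof. by rewrite opprD opprK addrA addrAC addrK addrC. Qed.
Lemma Z7 (V : zmodType) (a b c : V) : a + b - (a + c) = b - c.
Proof. by rewrite opprD addrA [a + b - a]addrAC subrr add0r. Qed.

Lemma comm_C1C2 (K : fieldType) : comm (C1 K) (C2 K) = mx2 w q0 r0 w.
Proof.
rewrite /comm /C1 /C2 !mx2M mx2B !xgenE.
have E : forall (M : SA K) p, M * sc p = sc p * M by move=> M p; rewrite scC.
rewrite /w /q0 /r0 /a1 /a2; congr mx2.
- by rewrite (E (sc _)) Z7.
- by rewrite (E (ygen K 0)) (E (ygen K 1)) !scB !mulrBl Z5.
- by rewrite (E (ygen K 2)) (E (ygen K 3)) !scB !mulrBl Z5.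
- by rewrite (@Yanti K 2 1) // (@Yanti K 3 0) // (E (sc _)) Z6.
Qed.

Definition Yb {K : fieldType} (b : bool) : SA K := ygen K (if b then 1 else 0)%N.
Definition Yb' {K : fieldType} (b : bool) : SA K := ygen K (if b then 3 else 2)%N.
Definition ab {K : fieldType} (b : bool) : KX K := if b then a2 else a1.

Definition step {K : fieldType} (t : SA K * SA K * SA K) (b : bool) : SA K * SA K * SA K :=
  let: (d, q, r) := t in
  (- (Yb b * r + Yb' b * q), - (sc (ab b) * q), sc (ab b) * r).
Definition st {K : fieldType} (s : seq bool) : SA K * SA K * SA K := foldl step (w, q0, r0) s.
Definition Dd {K : fieldType} s : SA K := (st s).1.1.
Definition Qd {K : fieldType} s : SA K := (st s).1.2.
Definition Rd {K : fieldType} s : SA K := (st s).2.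

Lemma Oddq0 (K : fieldType) : Odd (q0 : SA K).
Proof. by apply: OddB; apply: Odd_sc; apply: OddY. Qed.
Lemma Oddr0 (K : fieldType) : Odd (r0 : SA K).
Proof. by apply: OddB; apply: Odd_sc; apply: OddY. Qed.
Lemma Evenw (K : fieldType) : Even (w : SA K).
Proof. by apply: EvenD; [|apply: EvenN]; apply: EvenOO; apply: OddY. Qed.
Lemma OddYb (K : fieldType) b : Odd (Yb b : SA K).
Proof. by apply: OddY; case: b. Qed.
Lemma OddYb' (K : fieldType) b : Odd (Yb' b : SA K).
Proof. by apply: OddY; case: b. Qed.

Lemma st_rcons (K : fieldType) s b :
  @Dd K (rcons s b) = - (Yb b * Rd s + Yb' b * Qd s) /\
  @Qd K (rcons s b) = - (sc (ab b) * Qd s) /\ @Rd K (rcons s b) = sc (ab b) * Rd s.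
Proof. by rewrite /Dd /Qd /Rd /st foldl_rcons; case: (foldl _ _ _) => [[d q] r]. Qed.

Lemma st_inv (K : fieldType) s : Even (@Dd K s) /\ Odd (@Qd K s) /\ Odd (@Rd K s).
Proof.
elim/last_ind: s => [|s b [hd [hq hr]]]; first by split; [exact: Evenw|split; [exact: Oddq0|exact: Oddr0]].
case: (st_rcons K s b) => -> [-> ->].
split; first by apply: EvenN; apply: EvenD; apply: EvenOO => //; [apply: OddYb|apply: OddYb'].
by split; [apply: OddN|]; apply: Odd_sc.
Qed.

Lemma Cb_eq (K : fieldType) (b : bool) :
  (if b then C2 K else C1 K) =
  mx2 (sc (if b then 'X_1 else 'X_0)) (Yb b) (Yb' b) (sc (if b then 'X_3 else 'X_2)).
Proof. by case: b. Qed.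

Lemma lncomm_st (K : fieldType) s :
  lncomm (C1 K) (C2 K) s = mx2 (Dd s) (Qd s) (Rd s) (Dd s).
Proof.
elim/last_ind: s => [|s b IH]; first by rewrite /lncomm /= comm_C1C2.
rewrite /lncomm foldl_rcons -/(lncomm _ _ s) IH Cb_eq.
have [hd [hq hr]] := st_inv K s.
rewrite comm_key //; try by case: b.
case: (st_rcons K s b) => -> [-> ->].
by case: b.
Qed.

Definition Apoly {K : fieldType} (s : seq bool) : KX K := a1 ^+ count negb s * a2 ^+ count id s.

Lemma Apoly_rcons (K : fieldType) s b : @Apoly K (rcons s b) = Apoly s * ab b.
Proof.
rewrite /Apoly -cats1 !count_cat /=; case: b => /=; rewrite ?addn0 ?addn1 !exprS /ab; ring.
Qed.

Lemma Rd_form (K : fieldType) s : @Rd K s = sc (Apoly s) * r0.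
Proof.
elim/last_ind: s => [|s b IH]; first by rewrite /Rd /= /Apoly /= mulr1 sc1 mul1r.
case: (st_rcons K s b) => _ [_ ->]; by rewrite IH scMA Apoly_rcons mulrC.
Qed.

Lemma Qd_form (K : fieldType) s : @Qd K s = sc ((-1) ^+ size s * Apoly s) * q0.
Proof.
elim/last_ind: s => [|s b IH]; first by rewrite /Qd /= /Apoly /= !mulr1 sc1 mul1r.
case: (st_rcons K s b) => _ [-> _]; rewrite IH scMA -mulNr -scN Apoly_rcons size_rcons exprS.
congr (sc _ * _); ring.
Qed.

Definition centr {R : pzRingType} (c : R) := forall z, c * z = z * c.

Lemma Z8 (V : zmodType) (a b : V) : 0 - - a - (a - 0) = 0.
Proof. by rewrite sub0r opprK subr0 subrr. Qed.

Lemma Z9 (V : zmodType) (a b c d : V) : - a - - b - (- c - - d) = - (a - c - (b - d)).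
Proof. by rewrite !opprK opprB opprD opprK opprB addrACA addrC [- a + c]addrC. Qed.

Lemma gr_sq (R : pzRingType) (c1 c2 ya yb : R) :
  centr c1 -> centr c2 -> ya * ya = 0 -> yb * yb = 0 -> yb * ya = - (ya * yb) ->
  (c1 * yb - c2 * ya) * (c1 * yb - c2 * ya) = 0.
Proof.
move=> h1 h2 ha hb hab.
have L1 : forall B, yb * (c1 * B) = c1 * (yb * B) by move=> B; rewrite mulrA -h1 mulrA.
have L2 : forall B, yb * (c2 * B) = c2 * (yb * B) by move=> B; rewrite mulrA -h2 mulrA.
have L3 : forall B, ya * (c1 * B) = c1 * (ya * B) by move=> B; rewrite mulrA -h1 mulrA.
have L4 : forall B, ya * (c2 * B) = c2 * (ya * B) by move=> B; rewrite mulrA -h2 mulrA.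
have L5 : forall B : R, c2 * (c1 * B) = c1 * (c2 * B) by move=> B; rewrite mulrA -h1 mulrA.
rewrite !mulrBl !mulrBr -!mulrA L1 L2 L3 L4 L5 ha hb hab !mulr0 mulrN !mulrN.
by rewrite Z8.
Qed.

Lemma gr_main (R : pzRingType) (c1 c2 y0 y1 y2 y3 : R) :
  centr c1 -> centr c2 ->
  y0 * y0 = 0 -> y1 * y1 = 0 -> y2 * y2 = 0 -> y3 * y3 = 0 ->
  y1 * y0 = - (y0 * y1) -> y2 * y0 = - (y0 * y2) -> y3 * y0 = - (y0 * y3) ->
  y2 * y1 = - (y1 * y2) -> y3 * y1 = - (y1 * y3) -> y3 * y2 = - (y2 * y3) ->
  let q := c1 * y1 - c2 * y0 in let r := c2 * y2 - c1 * y3 in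
  let ww := y0 * y3 - y1 * y2 in
  r * q = - (q * r) /\ q * r * ww = 0.
Proof.
move=> h1 h2 s0 s1 s2 s3 a01 a02 a03 a12 a13 a23 q r ww.
have cL : forall c y B : R, centr c -> y * (c * B) = c * (y * B).
  by move=> c y B hc; rewrite mulrA -hc mulrA.
have L5 : forall B : R, c2 * (c1 * B) = c1 * (c2 * B) by move=> B; rewrite mulrA -h1 mulrA.
have S : forall y B : R, y * y = 0 -> y * (y * B) = 0 by move=> y B h; rewrite mulrA h mul0r.
have A : forall y y' B : R, y' * y = - (y * y') -> y' * (y * B) = - (y * (y' * B)).
  by move=> y y' B h; rewrite mulrA h mulNr mulrA.
rewrite /q /r /ww.
split.
  rewrite !mulrBl !mulrBr -!mulrA !(cL c1 y0) // !(cL c1 y1) // !(cL c1 y2) // !(cL c1 y3) //.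
  rewrite !(cL c2 y0) // !(cL c2 y1) // !(cL c2 y2) // !(cL c2 y3) // !L5.
  rewrite a12 a13 a02 a03 !mulrN.
  by rewrite Z9.
do 3 rewrite ?mulrBl ?mulrBr -?mulrA ?mulrN ?mulNr.
do 2 rewrite ?(cL c1 y0) // ?(cL c1 y1) // ?(cL c1 y2) // ?(cL c1 y3) //
  ?(cL c2 y0) // ?(cL c2 y1) // ?(cL c2 y2) // ?(cL c2 y3) // ?L5 ?mulrN.
do 4 rewrite ?(A _ _ _ a01) ?(A _ _ _ a02) ?(A _ _ _ a03) ?(A _ _ _ a12) ?(A _ _ _ a13) ?(A _ _ _ a23)
  ?a01 ?a02 ?a03 ?a12 ?a13 ?a23 ?(S _ _ s0) ?(S _ _ s1) ?(S _ _ s2) ?(S _ _ s3) ?s0 ?s1 ?s2 ?s3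
  ?mulrN ?mulr0 ?oppr0 ?opprK.
by rewrite !(addr0, add0r, subr0, sub0r, opprK, oppr0) subrr.
Qed.

Lemma ZA (V : zmodType) (a b c d : V) : a + b - (c + d) = a - c + (b - d).
Proof. by rewrite opprD addrACA. Qed.

Lemma gr_X (R : pzRingType) (c1 c2 cs y0 y1 y2 y3 : R) :
  centr cs ->
  (c2 * y2 - c1 * y3) * (c1 * y1 - c2 * y0) = - ((c1 * y1 - c2 * y0) * (c2 * y2 - c1 * y3)) ->
  c2 * (y0 * (c2 * y2 - c1 * y3) + y2 * (cs * (c1 * y1 - c2 * y0)))
  - c1 * (y1 * (c2 * y2 - c1 * y3) + y3 * (cs * (c1 * y1 - c2 * y0)))
  = - ((1 + cs) * ((c1 * y1 - c2 * y0) * (c2 * y2 - c1 * y3))).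
Proof.
set q := c1 * y1 - c2 * y0; set r := c2 * y2 - c1 * y3 => hcs hrq.
have -> : c2 * (y0 * r + y2 * (cs * q)) - c1 * (y1 * r + y3 * (cs * q)) =
  (c2 * y0 - c1 * y1) * r + (c2 * y2 - c1 * y3) * (cs * q).
  by rewrite !mulrBl !mulrDr !mulrA ZA.
rewrite -/r.
have -> : c2 * y0 - c1 * y1 = - q by rewrite /q opprB.
by rewrite mulNr (mulrA r) -hcs -mulrA hrq mulrN (mulrDl 1 cs) (mul1r (q * r)) opprD.
Qed.

Lemma gr_ann (R : pzRingType) (q r v : R) :
  q * q = 0 -> r * r = 0 -> r * q = - (q * r) -> (v = q \/ v = r) -> q * r * v = 0.
Proof.
move=> hq hr hrq [->|->]; first by rewrite -mulrA hrq mulrN mulrA hq mul0r oppr0.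
by rewrite -mulrA hr mulr0.
Qed.

Lemma gr_D (R : pzRingType) (t o A ss y yb' r q : R) :
  centr t -> centr o -> centr A -> centr ss ->
  (o * t) * - (y * (A * r) + yb' * ((ss * A) * q)) =
  - ((A * t) * (o * (y * r + yb' * (ss * q)))).
Proof.
move=> ht ho hA hs.
have cL : forall c z B : R, centr c -> z * (c * B) = c * (z * B).
  by move=> c z B hc; rewrite mulrA -hc mulrA.
rewrite mulrN !mulrDr -!mulrA.
do 6 rewrite ?(cL A y) // ?(cL A yb') // ?(cL o y) // ?(cL o yb') // ?(cL t y) // ?(cL t yb') //
  ?(cL ss y) // ?(cL ss yb') // ?(cL A o) // ?(cL A ss) // ?(cL A t) // ?(cL o ss) // ?(cL o t) // ?(cL ss t) //.
Qed.

Arguments gr_sq {R c1 c2 ya yb}.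
Arguments gr_main {R c1 c2 y0 y1 y2 y3}.
Arguments gr_X {R c1 c2 cs y0 y1 y2 y3}.
Arguments gr_D {R t o A ss y yb' r q}.
Arguments gr_ann {R q r v}.

Lemma centr_sc (K : fieldType) (p : KX K) : centr (sc p).
Proof. by move=> z; rewrite scC. Qed.

Lemma q0q0 (K : fieldType) : (q0 : SA K) * q0 = 0.
Proof. exact:  (gr_sq (centr_sc _ _) (centr_sc _ _) (@Ysq K 0 isT) (@Ysq K 1 isT) (@Yanti K 1 0 isT isT)). Qed.
Lemma r0r0 (K : fieldType) : (r0 : SA K) * r0 = 0.
Proof. exact: (gr_sq (centr_sc _ _) (centr_sc _ _) (@Ysq K 3 isT) (@Ysq K 2 isT) (@Yanti K 2 3 isT isT)). Qed.

Lemma gr_conc (K : fieldType) : (r0 : SA K) * q0 = - (q0 * r0) /\ (q0 : SA K) * r0 * w = 0.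
Proof.
exact: (gr_main (centr_sc _ _) (centr_sc _ _) (@Ysq K 0 isT) (@Ysq K 1 isT)
  (@Ysq K 2 isT) (@Ysq K 3 isT)
  (@Yanti K 1 0 isT isT) (@Yanti K 2 0 isT isT) (@Yanti K 3 0 isT isT)
  (@Yanti K 2 1 isT isT) (@Yanti K 3 1 isT isT) (@Yanti K 3 2 isT isT)).
Qed.

Definition sg {K : fieldType} (k : nat) : KX K := (-1) ^+ k.
Definition Et {K : fieldType} k : SA K := sc a1 * (ygen K 1 * r0 + ygen K 3 * (sc (sg k) * q0)).
Definition Ef {K : fieldType} k : SA K := sc a2 * (ygen K 0 * r0 + ygen K 2 * (sc (sg k) * q0)).

Lemma X_form (K : fieldType) k : @Ef K k - Et k = - ((1 + sc (sg k)) * (q0 * r0)).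
Proof. exact: (gr_X (centr_sc _ _) (gr_conc K).1). Qed.

Lemma X_ann (K : fieldType) k (v : SA K) : (v = q0 \/ v = r0 \/ v = w) -> (Ef k - Et k) * v = 0.
Proof.
move=> hv; rewrite X_form mulNr -mulrA.
suff -> : (q0 : SA K) * r0 * v = 0 by rewrite mulr0 oppr0.
case: hv => [hv|[hv|->]]; last exact: (gr_conc K).2.
  by apply: (gr_ann (q0q0 K) (r0r0 K) (gr_conc K).1); left.
by apply: (gr_ann (q0q0 K) (r0r0 K) (gr_conc K).1); right.
Qed.

Lemma Dform (K : fieldType) s b :
  sc (a1 * a2) * @Dd K (rcons s b) =
  - (sc (Apoly (rcons s b)) * (Et (size s) + sc ((~~ b)%:R) * (Ef (size s) - Et (size s)))).
Proof.
case: (st_rcons K s b) => -> _.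
rewrite Rd_form Qd_form Apoly_rcons (scM _ (Apoly s)) (scM _ (sg (size s))) (scM _ a1 a2) -/(sg (size s)).
case: b; rewrite /Yb /Yb' /ab /=.
  rewrite mulr0n sc0 mul0r addr0 /Et.
  exact: (gr_D (centr_sc _ _) (centr_sc _ _) (centr_sc _ _) (centr_sc _ _)).
rewrite mulr1n sc1 mul1r (addrC (Et (size s))) subrK /Ef.
rewrite (scC _ a1).
exact: (gr_D (centr_sc _ _) (centr_sc _ _) (centr_sc _ _) (centr_sc _ _)).
Qed.

Lemma ApolyE (K : fieldType) s : @Apoly K s = a1 ^+ count negb s * a2 ^+ count id s.
Proof. by []. Qed.
Lemma a1E (K : fieldType) : (a1 : KX K) = 'X_0 - 'X_2.
Proof. by []. Qed.
Lemma Dd_nil (K : fieldType) : @Dd K [::] = w.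
Proof. by []. Qed.

Lemma mxBE (K : fieldType) (A B : SA K) i j : (A - B) i j = A i j - B i j.
Proof. by rewrite !mxE. Qed.

Lemma r0_entry (K : fieldType) (p : KX K) : sc p * (r0 : SA K) = 0 -> p * a2 = 0.
Proof.
move/(congr1 (fun M : SA K => M (inord 4) ord0)); rewrite scE /r0 mxBE !scE.
rewrite !Yentry // inordK //= !addn0 expr0 mulr1 mulr0 subr0 => ->.
by rewrite /GRing.zero /= mxE.
Qed.

Lemma sc_cancel (K : fieldType) (p : KX K) (M : SA K) : p != 0 -> sc p * M = 0 -> M = 0.
Proof.
move=> hp hM; apply/matrixP => i j; have := congr1 (fun M : SA K => M i j) hM.
rewrite scE [in X in _ = X -> _]/GRing.zero /= [in X in _ = X -> _]mxE.
move=> /eqP; rewrite mulf_eq0 (negbTE hp) /= => /eqP ->.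
by rewrite /GRing.zero /= mxE.
Qed.

Lemma scAC (K : fieldType) (p q : KX K) (M : SA K) : sc p * (sc q * M) = sc q * (sc p * M).
Proof. by rewrite !scMA mulrC. Qed.

Lemma Dform' (K : fieldType) s : (0 < size s)%N ->
  sc (a1 * a2) * @Dd K s =
  - (sc (Apoly s) * (Et (size s).-1 + sc ((~~ last true s)%:R) * (Ef (size s).-1 - Et (size s).-1))).
Proof.
case/lastP: s => [//|s b] _; rewrite Dform size_rcons last_rcons.
by [].
Qed.

Lemma a1_neq0 (K : fieldType) : (a1 : KX K) != 0.
Proof.
apply/eqP => /(congr1 (mcoeff U_(0))); rewrite /a1 mcoeffB !mcoeffX eq_mnm1 eqxx mcoeff0.
by rewrite eq_mnm1 /= subr0 => /eqP; rewrite oner_eq0.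
Qed.
Lemma a2_neq0 (K : fieldType) : (a2 : KX K) != 0.
Proof.
apply/eqP => /(congr1 (mcoeff U_(1))); rewrite /a2 mcoeffB !mcoeffX eq_mnm1 eqxx mcoeff0.
by rewrite eq_mnm1 /= subr0 => /eqP; rewrite oner_eq0.
Qed.

Opaque w q0 r0 Dd Qd Rd Et Ef a1 a2 Apoly.

Lemma C1_eq (K : fieldType) : C1 K = mx2 (sc 'X_0) (ygen K 0) (ygen K 2) (sc 'X_2).
Proof. exact: (Cb_eq K false). Qed.
Lemma C2_eq (K : fieldType) : C2 K = mx2 (sc 'X_1) (ygen K 1) (ygen K 3) (sc 'X_3).
Proof. exact: (Cb_eq K true). Qed.

Lemma scalK_eq (K : fieldType) (c : K) : scalK c = mx2 (sc c%:MP) 0 0 (sc c%:MP).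
Proof. exact: scalX_mx2. Qed.

Lemma scalK_central (K : fieldType) (c : K) (M : 'M[SA K]_2) : scalK c * M = M * scalK c.
Proof.
rewrite scalK_eq [M]mx2_eta !mx2M.
by rewrite !mul0r !mulr0 !addr0 !add0r !(scC _ c%:MP).
Qed.

Lemma diag_comm (K : fieldType) (d a b c e : SA K) :
  d * a = a * d -> d * b = b * d -> d * c = c * d -> d * e = e * d ->
  mx2 d 0 0 d * mx2 a b c e = mx2 a b c e * mx2 d 0 0 d.
Proof.
move=> ha hb hc he; rewrite !mx2M.
by rewrite !mul0r !mulr0 !addr0 !add0r ha hb hc he.
Qed.

Lemma Z_comm_F (K : fieldType) (d : SA K) : Even d ->
  forall x, inF x -> mx2 d 0 0 d * x = x * mx2 d 0 0 d.
Proof.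
move=> hd x; elim => {x}.
- by move=> c; rewrite scalK_central.
- by rewrite C1_eq; apply: diag_comm; rewrite ?hd // scC.
- by rewrite C2_eq; apply: diag_comm; rewrite ?hd // scC.
- by move=> a b _ ha _ hb; rewrite mulrDr mulrDl ha hb.
- by move=> a b _ ha _ hb; rewrite mulrA ha -mulrA hb mulrA.
Qed.

Lemma Z_c (K : fieldType) (d : SA K) :
  d * w = 0 -> d * q0 = 0 -> d * r0 = 0 -> mx2 d 0 0 d * comm (C1 K) (C2 K) = 0.
Proof.
move=> h1 h2 h3; rewrite (comm_C1C2 K); move: (w) (q0) (r0) h1 h2 h3 => W Q R h1 h2 h3.
rewrite mx2M !mul0r !addr0 !add0r h1 h2 h3.
exact: mx20.
Qed.

Lemma comm_sq (R : pzRingType) (a : R) : comm a a = 0.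
Proof. by rewrite /comm subrr. Qed.
Lemma comm_anti (R : pzRingType) (a b : R) : comm b a = - comm a b.
Proof. by rewrite /comm opprB. Qed.
Lemma commD (R : pzRingType) (a b c : R) : comm (a + b) c = comm a c + comm b c.
Proof. by rewrite /comm mulrDl mulrDr opprD addrACA. Qed.
Lemma commM (R : pzRingType) (a b c : R) : comm (a * b) c = a * comm b c + comm a c * b.
Proof.
by rewrite /comm mulrBr mulrBl !mulrA addrA subrK.
Qed.

Lemma Z_commF_gen (K : fieldType) (Z : 'M[SA K]_2) :
  (forall x, inF x -> Z * x = x * Z) -> Z * comm (C1 K) (C2 K) = 0 ->
  forall b, inF b -> forall C, (C = C1 K \/ C = C2 K) -> Z * comm b C = 0.
Proof.
move=> hZF hZc b; elim => {b}.
- by move=> c C _; rewrite /comm scalK_central subrr mulr0.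
- by move=> C [->|->]; [rewrite comm_sq mulr0 | exact: hZc].
- move=> C [->|->]; last by rewrite comm_sq mulr0.
  by rewrite comm_anti mulrN hZc oppr0.
- move=> a b _ ha _ hb C hC; rewrite commD mulrDr.
  move: (comm a C) (comm b C) (ha C hC) (hb C hC) => X Y hX hY.
  by rewrite hX hY addr0.
- move=> a b ia ha _ hb C hC; rewrite commM mulrDr mulrA (hZF _ ia) -mulrA.
  move: (comm a C) (comm b C) (ha C hC) (hb C hC) => X Y hX hY.
  by rewrite hY mulr0 add0r mulrA hX mul0r.
Qed.

Lemma Z_strong_gen (K : fieldType) (Z : 'M[SA K]_2) :
  (forall x, inF x -> Z * x = x * Z) -> Z * comm (C1 K) (C2 K) = 0 ->
  strongly_central_in_F Z.
Proof.
move=> hZF hZc; split; first by move=> b hb; apply: hZF.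
move=> b hb x; elim => {x}.
- by move=> c; rewrite scalK_central.
- have := Z_commF_gen _ _ hZF hZc _ hb _ (or_introl (erefl (C1 K))).
  move: (C1 K) (hZF _ (inF_C1 K)) => C HC.
  rewrite /comm mulrBr => /eqP; rewrite subr_eq0 => /eqP E.
  by rewrite -mulrA E mulrA HC mulrA.
- have := Z_commF_gen _ _ hZF hZc _ hb _ (or_intror (erefl (C2 K))).
  move: (C2 K) (hZF _ (inF_C2 K)) => C HC.
  rewrite /comm mulrBr => /eqP; rewrite subr_eq0 => /eqP E.
  by rewrite -mulrA E mulrA HC mulrA.
- by move=> a c _ ha _ hc; rewrite mulrDr mulrDl ha hc.
- by move=> a c _ ha _ hc; rewrite mulrA ha -mulrA hc mulrA.
Qed.

Lemma Z_strong (K : fieldType) (d : SA K) : Even d ->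
  d * w = 0 -> d * q0 = 0 -> d * r0 = 0 -> strongly_central_in_F (mx2 d 0 0 d).
Proof.
move=> hd h1 h2 h3; apply: Z_strong_gen; first exact: Z_comm_F.
exact: Z_c.
Qed.

Lemma scalX_mul (K : fieldType) (a : KX K) (d q r : SA K) :
  scalX a * mx2 d q r d = mx2 (sc a * d) (sc a * q) (sc a * r) (sc a * d).
Proof. by rewrite scalX_mx2 mx2M !mul0r !addr0 !add0r. Qed.

Lemma f_form (K : fieldType) r (u : 'I_r -> seq bool) (alpha : 'I_r -> KX K) :
  \sum_(j < r) scalX (alpha j) * lncomm (C1 K) (C2 K) (u j) =
  mx2 (\sum_j sc (alpha j) * Dd (u j)) (\sum_j sc (alpha j) * Qd (u j))
      (\sum_j sc (alpha j) * Rd (u j)) (\sum_j sc (alpha j) * Dd (u j)).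
Proof. by rewrite -mx2_sum; apply: eq_bigr => j _; rewrite lncomm_st scalX_mul. Qed.

Lemma sum_sc (K : fieldType) r (al : 'I_r -> KX K) (c : KX K) (M : SA K) :
  \sum_j sc (al j) * (sc c * M) = sc ((\sum_j al j) * c) * M.
Proof.
under eq_bigr => j _ do rewrite scMA.
by rewrite -mulr_suml -scsum mulr_suml.
Qed.

Lemma central_Rf (K : fieldType) (D Q R : SA K) : Even D -> Odd Q -> Odd R ->
  mx2 D Q R D * C1 K = C1 K * mx2 D Q R D -> sc a1 * R = 0.
Proof.
move=> hD hQ hR E.
have : comm (mx2 D Q R D) (C1 K) = 0 by rewrite /comm E subrr.
rewrite C1_eq comm_key // -mx20 => /mx2_inj [_ _ H _].
by rewrite a1E.
Qed.

Lemma sum_lin (R : pzRingType) r (a b : 'I_r -> R) (c E X : R) :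
  (forall j, centr (a j)) -> centr c ->
  \sum_j a j * - (c * (E + b j * X)) = - (c * ((\sum_j a j) * E + (\sum_j a j * b j) * X)).
Proof.
move=> ha hc.
have -> : \sum_j a j * - (c * (E + b j * X)) = \sum_j - (c * (a j * E) + c * (a j * b j * X)).
  apply: eq_bigr => j _; rewrite mulrN !mulrDr !mulrA (ha j c) -!mulrA.
  by rewrite [a j * (b j * X)]mulrA.
by rewrite sumrN big_split /= -!mulr_sumr -!mulr_suml mulrDr.
Qed.

Lemma final_step (K : fieldType) (D G X v : SA K) (p c : KX K) :
  p != 0 -> sc p * D = - (sc c * (G * X)) -> X * v = 0 -> D * v = 0.
Proof.
move=> hp key hX; apply: (@sc_cancel K p (D * v) hp).
by rewrite mulrA key mulNr -!mulrA hX !mulr0 oppr0.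
Qed.

Lemma sc_zero (K : fieldType) (p c : KX K) (M : SA K) : p = 0 -> sc (p * c) * M = 0.
Proof. by move=> ->; rewrite mul0r sc0 mul0r. Qed.

Theorem proposition3 (K : fieldType)
  (K_infinite : forall s : seq K, exists x : K, x \notin s)
  (K_char : (2%:R : K) != 0)
  (n m : nat) (hn : (1 <= n)%N) (hm : (1 <= m)%N)
  (r : nat) (u : 'I_r -> seq bool) (alpha : 'I_r -> {mpoly K[4]})
  (hdeg1 : forall j, deg_t1 (u j) = n)
  (hdeg2 : forall j, deg_t2 (u j) = m)
  (hF : inF (\sum_(j < r) scalX (alpha j) * lncomm (C1 K) (C2 K) (u j))) :
  let f := \sum_(j < r) scalX (alpha j) * lncomm (C1 K) (C2 K) (u j) in
  (strongly_central_in_F f <-> central_in_F f) /\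
  (central_in_F f <-> \sum_(j < r) alpha j = 0).
Proof.
move=> f.
pose k := (n.-1 + m.-1)%N.
pose A0 : KX K := a1 ^+ n.-1 * a2 ^+ m.-1.
have hcnt1 j : count negb (u j) = n.-1 by have := hdeg1 j; rewrite /deg_t1 => <-.
have hcnt2 j : count id (u j) = m.-1 by have := hdeg2 j; rewrite /deg_t2 => <-.
have hsize j : size (u j) = k.
  by rewrite /k -(hcnt1 j) -(hcnt2 j) -(count_predC id) addnC.
have hA j : Apoly (u j) = A0 by rewrite ApolyE hcnt1 hcnt2.
have hA0 : A0 != 0 by rewrite mulf_neq0 // expf_neq0 // ?a1_neq0 ?a2_neq0.
pose Sa := \sum_(j < r) alpha j.
have hEven : Even (\sum_j sc (alpha j) * Dd (u j)).
  by apply: Even_sum => j; apply: Even_sc; case: (st_inv K (u j)).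
have ff : f = mx2 (\sum_j sc (alpha j) * Dd (u j)) (sc (Sa * ((-1) ^+ k * A0)) * q0)
                 (sc (Sa * A0) * r0) (\sum_j sc (alpha j) * Dd (u j)).
  rewrite /f f_form; congr mx2.
    under eq_bigr => j _ do rewrite Qd_form hsize hA.
    exact: sum_sc.
  under eq_bigr => j _ do rewrite Rd_form hA.
  exact: sum_sc.
have ann : forall v, (v = q0 \/ v = r0 \/ v = w) -> Sa = 0 ->
    (\sum_j sc (alpha j) * Dd (u j)) * v = 0.
  move=> v hv hS.
  case: (posnP k) => hk.
    have -> : \sum_j sc (alpha j) * Dd (u j) = 0.
      under eq_bigr => j _ do rewrite (size0nil (etrans (hsize j) hk)) Dd_nil.
      by rewrite -mulr_suml -scsum -/Sa hS sc0 mul0r.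
    by rewrite mul0r.
  have hDf j : sc (a1 * a2) * Dd (u j) =
      - (sc A0 * (Et k.-1 + sc ((~~ last true (u j))%:R) * (Ef k.-1 - Et k.-1))).
    by rewrite Dform' ?hsize ?hA.
  have key : sc (a1 * a2) * (\sum_j sc (alpha j) * Dd (u j)) =
      - (sc A0 * ((\sum_j sc (alpha j)) * Et k.-1 +
         (\sum_j sc (alpha j) * sc ((~~ last true (u j))%:R)) * (Ef k.-1 - Et k.-1))).
    rewrite mulr_sumr.
    under eq_bigr => j _ do rewrite scAC hDf.
    by apply: sum_lin => [j|]; exact: centr_sc.
  rewrite -scsum -/Sa hS sc0 mul0r add0r in key.
  exact: (@final_step _ _ _ _ _ _ _ (mulf_neq0 (a1_neq0 K) (a2_neq0 K)) key (X_ann _ _ _ hv)).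
move: (\sum_j sc (alpha j) * Dd (u j)) hEven ff ann => Df hEven ff ann.
have H23 : central_in_F f -> Sa = 0.
  move=> hc; have E := hc _ (inF_C1 K).
  rewrite ff in E.
  have := @central_Rf K _ _ _ hEven (Odd_sc _ _ _ (Oddq0 K)) (Odd_sc _ _ _ (Oddr0 K)) E.
  rewrite scMA => /r0_entry /eqP.
  rewrite mulf_eq0 (negbTE (a2_neq0 K)) orbF mulf_eq0 (negbTE (a1_neq0 K)) /=.
  by rewrite mulf_eq0 (negbTE hA0) orbF => /eqP.
have H31 : Sa = 0 -> strongly_central_in_F f.
  move=> hS; rewrite ff (@sc_zero K Sa _ q0 hS) (@sc_zero K Sa _ r0 hS).
  apply: (@Z_strong K Df hEven); apply: ann hS; [right; right | left | right; left]; exact: erefl.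
split; split.
- by case.
- by move=> hc; apply: H31; apply: H23.
- exact: H23.
- by move=> hS; case: (H31 hS).
Qed.
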